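(* Let $d\ge1$. As a multigraded vector space, the square $F_d(\mathfrak B)^2$ of the free bicommutative algebra is isomorphic to $\omega(K[Y_d])\otimes\omega(K[Z_d])$, where $\omega$ denotes the augmentation ideal (polynomials without constant term) and both $y_i$ and $z_i$ are given degree $1$ in the $i$-th grading. As a $GL_d$-module, $F_d(\mathfrak B)^2\cong\bigoplus_{p,q\ge 1}W_d(p)\otimes W_d(q)$.
   Context: $K$ is a field of characteristic $0$. $\mathfrak B$ is the variety of bicommutative algebras (identities $(x_1x_2)x_3=(x_1x_3)x_2$ and $x_1(x_2x_3)=x_2(x_1x_3)$); $F_d(\mathfrak B)$ is its free algebra on $x_1,\dots,x_d$, multigraded by the degrees in each $x_i$. $GL_d$ acts on $F_d(\mathfrak B)$ by extending its natural action on $\mathrm{span}(x_1,\dots,x_d)$ to algebra automorphisms. $K[Y_d]=K[y_1,\dots,y_d]$, $K[Z_d]=K[z_1,\dots,z_d]$ are polynomial rings, with $GL_d$ acting on $\mathrm{span}(y_i)$ and $\mathrm{span}(z_i)$ as on $\mathrm{span}(x_i)$. $W_d(p)$ is the irreducible polynomial $GL_d$-module indexed by the one-row partition $(p)$ (isomorphic to the homogeneous polynomials of degree $p$ in $d$ variables). *)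

(* Defs.v *)
From HB Require Import structures.
From mathcomp Require Import all_boot all_order all_algebra.
Set Implicit Arguments. Unset Strict Implicit. Unset Printing Implicit Defensive.
Import GRing.Theory.
Local Open Scope ring_scope.

(* Nonassociative monomials (binary trees) in the generators x_i; the     *)
(* generator x_i (i < d) is  BLeaf i.                                      *)
Inductive bmon : Type := BLeaf of nat | BNode of bmon & bmon.

Fixpoint bmon_enc (t : bmon) : GenTree.tree nat :=
  match t with
  | BLeaf n => GenTree.Leaf n
  | BNode a b => GenTree.Node 0 [:: bmon_enc a; bmon_enc b]
  end.

Fixpoint bmon_dec (t : GenTree.tree nat) : option bmon :=
  match t with
  | GenTree.Leaf n => Some (BLeaf n)
  | GenTree.Node _ [:: a; b] =>
      match bmon_dec a, bmon_dec b with
      | Some a', Some b' => Some (BNode a' b')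
      | _, _ => None
      end
  | _ => None
  end.

Lemma bmon_encK : pcancel bmon_enc bmon_dec.
Proof. by elim=> [n|a IHa b IHb] //=; rewrite IHa IHb. Qed.

HB.instance Definition _ := Countable.copy bmon (pcan_type bmon_encK).

Definition is_node (t : bmon) : bool := if t is BNode _ _ then true else false.

Fixpoint leaves (t : bmon) : seq nat :=
  match t with BLeaf i => [:: i] | BNode a b => leaves a ++ leaves b end.

Fixpoint shape (t : bmon) : bmon :=
  match t with BLeaf _ => BLeaf 0 | BNode a b => BNode (shape a) (shape b) end.

(* step t t' : t' is obtained from t by applying one of the defining identities
     (uv)w = (uw)v   or   u(vw) = v(uw)
   at one position, i.e. t = C[lhs], t' = C[rhs] for some context C and some
   monomials u, v, w.  The differences t - t' span the T-ideal (verbal ideal)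
   of the variety of bicommutative algebras in the free nonassociative algebra. *)
Fixpoint step (t t' : bmon) {struct t} : bool :=
  match t, t' with
  | BNode a b, BNode a' b' =>
      [|| match a, a' with
          | BNode u v, BNode u' w' => [&& u' == u, w' == b & b' == v]
          | _, _ => false end,
          match b, b' with
          | BNode v w, BNode u' w' => [&& a' == v, u' == a & w' == w]
          | _, _ => false end,
          step a a' && (b == b')
        | (a == a') && step b b']
  | _, _ => false
  end.

Fixpoint trees_aux (d f n : nat) : seq bmon :=
  match f with
  | 0 => [::]
  | f'.+1 =>
      if n == 1%N then [seq BLeaf i | i <- iota 0 d]
      else flatten [seq [seq BNode a b | a <- trees_aux d f' k,
                                         b <- trees_aux d f' (n - k)]
                   | k <- iota 1 n.-1]
  end.
Definition trees (d n : nat) : seq bmon := trees_aux d n n.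

(* monomial basis of the degree-n part of the square of the free
   nonassociative algebra: products (non-leaf trees) with n leaves *)
Definition sqbasis (d n : nat) : seq bmon := [seq t <- trees d n | is_node t].
Definition NS (d n : nat) : nat := size (sqbasis d n).
Definition sqt (d n : nat) (i : 'I_(NS d n)) : bmon := nth (BLeaf 0) (sqbasis d n) i.

Definition mdeg_tree (d : nat) (t : bmon) : seq nat :=
  [seq count_mem k (leaves t) | k <- iota 0 d].

(* degree-n component of the T-ideal of bicommutative identities,
   as a row space of row vectors in the basis sqbasis d n *)
Definition IdealB (K : fieldType) (d n : nat) : 'M[K]_(NS d n) :=
  (\sum_(i < NS d n) \sum_(j < NS d n)
     (if step (sqt i) (sqt j)
      then <<(delta_mx 0 i - delta_mx 0 j : 'rV[K]_(NS d n))>>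
      else 0))%MS.

(* Commutative monomials of degree p in d variables, as nondecreasing words *)
Fixpoint words (d p : nat) : seq (seq nat) :=
  match p with
  | 0 => [:: [::]]
  | p'.+1 => flatten [seq [seq i :: w | w <- words d p'] | i <- iota 0 d]
  end.
Definition swords (d p : nat) : seq (seq nat) := [seq w <- words d p | sorted leq w].

(* monomial basis of the total-degree-n part of
   omega(K[Y_d]) (x) omega(K[Z_d]) = (+)_{p,q>=1} K[Y_d]_p (x) K[Z_d]_q :
   pairs (u, v) standing for y^u (x) z^v, with |u| = p >= 1, |v| = n - p >= 1 *)
Definition pbasis (d n : nat) : seq (seq nat * seq nat) :=
  flatten [seq [seq (u, v) | u <- swords d p, v <- swords d (n - p)]
          | p <- iota 1 n.-1].
Definition NT (d n : nat) : nat := size (pbasis d n).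
Definition pt (d n : nat) (j : 'I_(NT d n)) : seq nat * seq nat :=
  nth ([::], [::]) (pbasis d n) j.

Definition mdeg_pair (d : nat) (uv : seq nat * seq nat) : seq nat :=
  [seq count_mem k (uv.1 ++ uv.2) | k <- iota 0 d].

(* GL_d action.  g acts on span(x_1..x_d) by  g . x_i = \sum_j g_{j i} x_j
   (and likewise on the y's and z's), extended to algebra endomorphisms.   *)
Definition gent (K : fieldType) (d : nat) (g : 'M[K]_d) (i j : nat) : K :=
  match (insub i : option 'I_d), (insub j : option 'I_d) with
  | Some i', Some j' => g i' j'
  | _, _ => 0
  end.

(* matrix of g on the basis sqbasis d n, acting on row vectors:
   entry (i, j) = coefficient of the monomial t_j in g . t_i
   (g . t_i = product expansion of the substitution x_k |-> g . x_k) *)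
Definition actS (K : fieldType) (d n : nat) (g : 'M[K]_d) : 'M[K]_(NS d n) :=
  \matrix_(i, j)
    (if shape (sqt i) == shape (sqt j)
     then \prod_(pr <- zip (leaves (sqt j)) (leaves (sqt i))) gent g pr.1 pr.2
     else 0).

(* coefficient of the commutative monomial (word) v in g . (monomial u):
   expanding  prod_k (sum_j g_{j,u_k} y_j)  *)
Definition pcoef (K : fieldType) (d : nat) (g : 'M[K]_d) (u v : seq nat) : K :=
  \sum_(w <- words d (size u) | perm_eq w v)
     \prod_(pr <- zip w u) gent g pr.1 pr.2.

Definition actT (K : fieldType) (d n : nat) (g : 'M[K]_d) : 'M[K]_(NT d n) :=
  \matrix_(i, j) (pcoef g (pt i).1 (pt j).1 * pcoef g (pt i).2 (pt j).2).

(* Main.v *)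
Require Import Defs.
From HB Require Import structures.
From mathcomp Require Import all_boot all_order all_algebra.
From mathcomp Require Import zify.
Import GRing.Theory.
Local Open Scope ring_scope.

Definition okl (d : nat) (s : seq nat) := all (fun i => (i < d)%N) s.

Lemma nlv_gt0 t : (0 < size (leaves t))%N.
Proof. elim: t => //= a IHa b _; rewrite size_cat; lia. Qed.

Lemma mem_trees_aux d f n t : (n <= f)%N ->
  (t \in trees_aux d f n) = (size (leaves t) == n) && okl d (leaves t).
Proof.
elim: f n t => [|f IH] n t hn /=.
  move: hn; rewrite leqn0 => /eqP ->; have := nlv_gt0 t; by case: (size _).
case: ifP => [/eqP -> | /negbT n1].
  case: t => [i|a b] /=.
    by rewrite mem_map ?mem_iota /= ?andbT //; move=> x y [].
  have -> : (BNode a b \in [seq BLeaf i | i <- iota 0 d]) = false.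
    by apply/mapP => -[].
  have := nlv_gt0 a; have := nlv_gt0 b; rewrite size_cat => ha hb.
  by symmetry; apply/andP => -[/eqP h _]; lia.
apply/idP/idP.
  move=> /flattenP [s /mapP [k hk ->] /allpairsP [[a b] [/= ha hb ->]]].
  move: hk; rewrite mem_iota => hk.
  rewrite IH in ha; last lia. rewrite IH in hb; last lia. rewrite /okl in ha hb.
  rewrite /= size_cat /okl all_cat.
  move/andP: ha => [/eqP sa aa]; move/andP: hb => [/eqP sb ab].
  rewrite aa ab andbT; apply/eqP; lia.
case: t => [i|a b] /= /andP [/eqP sz al].
  by rewrite -sz in n1.
have := nlv_gt0 a; have := nlv_gt0 b; move: sz al.
rewrite size_cat /okl all_cat => sz /andP [aa ab] hb ha.
apply/flattenP; exists [seq BNode a0 b0 | a0 <- trees_aux d f (size (leaves a)),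
                                     b0 <- trees_aux d f (n - size (leaves a))].
  apply/mapP; exists (size (leaves a)) => //; rewrite mem_iota -subn1; apply/andP; split; lia.
apply/allpairsP; exists (a, b); split => //=; rewrite IH /okl ?aa ?ab ?andbT ?eqxx //; try lia.
Qed.

Lemma uniq_flatten_map (T I : eqType) (s : seq I) (F : I -> seq T) (key : T -> I) :
  uniq s -> (forall i, i \in s -> uniq (F i)) ->
  (forall i x, i \in s -> x \in F i -> key x = i) -> uniq (flatten (map F s)).
Proof.
elim: s => //= i s IHs /andP [ni us] hu hk.
rewrite cat_uniq hu ?mem_head //= IHs //; last first.
- by move=> j x hj hx; apply: hk => //; rewrite in_cons hj orbT.
- by move=> j hj; apply: hu; rewrite in_cons hj orbT.
rewrite andbT; apply/hasPn => x /flattenP [s' /mapP [j hj ->] hx]; apply/negP => hxi.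
have e1 := hk i x (mem_head _ _) hxi.
have e2 := hk j x (mem_behead (s:=i::s) hj) hx.
by move: ni; rewrite -e1 e2 hj.
Qed.

Lemma trees_aux_size d f n t : t \in trees_aux d f n -> size (leaves t) = n.
Proof.
elim: f n t => [|f IH] n t //=; case: ifP => [/eqP -> /mapP [i _ ->] //| n1].
move=> /flattenP [s /mapP [k hk ->] /allpairsP [[a b] [/= ha hb ->]]].
move: hk; rewrite mem_iota -subn1 => hk.
by rewrite /= size_cat (IH _ _ ha) (IH _ _ hb); lia.
Qed.

Definition tkey (t : bmon) : nat := if t is BNode a _ then size (leaves a) else 0.

Lemma uniq_trees_aux d f n : uniq (trees_aux d f n).
Proof.
elim: f n => [|f IH] n //=; case: ifP => _.
  by rewrite map_inj_uniq ?iota_uniq // => x y [].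
apply: (@uniq_flatten_map _ _ _ _ (tkey)); first exact: iota_uniq.
  by move=> k _; apply: allpairs_uniq => // -[? ?] [? ?] _ _ [-> ->].
move=> k x _ /allpairsP [[a b] [/= ha hb ->]] /=.
exact: trees_aux_size ha.
Qed.

Lemma mem_sqbasis d n t :
  (t \in sqbasis d n) = [&& is_node t, size (leaves t) == n & okl d (leaves t)].
Proof. by rewrite mem_filter /trees mem_trees_aux. Qed.

Lemma uniq_sqbasis d n : uniq (sqbasis d n).
Proof. exact/filter_uniq/uniq_trees_aux. Qed.

Lemma mem_words d p w : (w \in words d p) = (size w == p) && okl d w.
Proof.
elim: p w => [|p IH] [|i w] //=.
  by apply/allpairsP => -[[j w'] [_ _]].
apply/idP/idP.
  move=> /allpairsP [[j w'] [/= hj hw' [-> ->]]].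
  by move: hj hw'; rewrite mem_iota IH /= add0n => h1 /andP [h2 h3]; apply/and3P; split.
move=> /and3P [hs hi hw].
apply/allpairsP; exists (i, w); split => //=; first by rewrite mem_iota. by rewrite IH hw andbT -eqSS.
Qed.

Lemma uniq_words d p : uniq (words d p).
Proof.
elim: p => [|p IH] //=.
apply: (@uniq_flatten_map _ _ _ _ (head 0%N)); first exact: iota_uniq.
  by move=> i _; rewrite map_inj_uniq // => x y [].
by move=> i x _ /mapP [w _ ->].
Qed.

Lemma sum_words_S (K : fieldType) d p (F : seq nat -> K) :
  \sum_(w <- words d p.+1) F w = \sum_(i <- iota 0 d) \sum_(w <- words d p) F (i :: w).
Proof. by rewrite /= big_flatten big_map; apply: eq_bigr => i _; rewrite big_map. Qed.

Lemma mem_pbasis d n u v : ((u, v) \in pbasis d n) =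
  [&& sorted leq u, sorted leq v, okl d u, okl d v, (0 < size u)%N, (0 < size v)%N
   & size u + size v == n]%N.
Proof.
apply/idP/idP.
  move=> /flattenP [s /mapP [k hk ->] /allpairsP [[u' v'] [/= hu hv [-> ->]]]].
  move: hk hu hv; rewrite mem_iota -subn1 !mem_filter !mem_words.
  move=> hk /andP [-> /andP [/eqP -> ->]] /andP [-> /andP [/eqP -> ->]] /=.
  apply/and3P; split; try (apply/eqP); lia.
move=> /and5P [su sv ou ov /and3P [hu hv /eqP hn]].
apply/flattenP; exists [seq (u0, v0) | u0 <- swords d (size u), v0 <- swords d (n - size u)].
  by apply/mapP; exists (size u) => //; rewrite mem_iota -subn1; apply/andP; split; lia.
apply/allpairsP; exists (u, v); split => //=; rewrite mem_filter mem_words ?su ?sv ?ou ?ov ?eqxx //=.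
by rewrite andbT -hn addKn.
Qed.

Lemma uniq_pbasis d n : uniq (pbasis d n).
Proof.
apply: (@uniq_flatten_map _ _ _ _ (fun uv : seq nat * seq nat => size uv.1)); first exact: iota_uniq.
  move=> k _; apply: allpairs_uniq; try exact/filter_uniq/uniq_words.
  by move=> [? ?] [? ?] _ _ [-> ->].
move=> k x _ /allpairsP [[u v] [/= hu hv ->]] /=.
by move: hu; rewrite mem_filter mem_words => /andP [_ /andP [/eqP]].
Qed.

Fixpoint Yl (t : bmon) : seq nat :=
  match t with
  | BLeaf _ => [::]
  | BNode a b => (if a is BLeaf i then [:: i] else Yl a) ++ (if b is BLeaf _ then [::] else Yl b)
  end.
Fixpoint Zl (t : bmon) : seq nat :=
  match t with
  | BLeaf _ => [::]
  | BNode a b => (if a is BLeaf _ then [::] else Zl a) ++ (if b is BLeaf j then [:: j] else Zl b)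
  end.
Definition lY t := if t is BLeaf i then [:: i] else Yl t.
Definition rY t := if t is BLeaf _ then [::] else Yl t.
Definition lZ t := if t is BLeaf _ then [::] else Zl t.
Definition rZ t := if t is BLeaf j then [:: j] else Zl t.
Lemma YlE a b : Yl (BNode a b) = lY a ++ rY b. Proof. by []. Qed.
Lemma ZlE a b : Zl (BNode a b) = lZ a ++ rZ b. Proof. by []. Qed.
Lemma nodeYZ {a : bmon} : is_node a -> [/\ lY a = Yl a, rY a = Yl a, lZ a = Zl a & rZ a = Zl a].
Proof. by case: a. Qed.
Lemma lYN a b : lY (BNode a b) = Yl (BNode a b). Proof. by []. Qed.
Lemma rYN a b : rY (BNode a b) = Yl (BNode a b). Proof. by []. Qed.
Lemma lZN a b : lZ (BNode a b) = Zl (BNode a b). Proof. by []. Qed.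
Lemma rZN a b : rZ (BNode a b) = Zl (BNode a b). Proof. by []. Qed.

Lemma cntYZ t P : is_node t -> count P (leaves t) = (count P (Yl t) + count P (Zl t))%N.
Proof.
elim: t => // a IHa b IHb _.
have ha : count P (leaves a) = (count P (lY a) + count P (lZ a))%N.
  by case: a IHa => [i|a1 a2] IHa; [rewrite /= ?addn0 | exact: (IHa isT)].
have hb : count P (leaves b) = (count P (rY b) + count P (rZ b))%N.
  by case: b IHb => [i|b1 b2] IHb; [by [] | exact: (IHb isT)].
change (leaves (BNode a b)) with (leaves a ++ leaves b).
by rewrite count_cat YlE ZlE !count_cat ha hb addnACA.
Qed.

Lemma perm_leaves {t : bmon} : is_node t -> perm_eq (leaves t) (Yl t ++ Zl t).
Proof. by move=> nt; apply/permP => P; rewrite count_cat cntYZ. Qed.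

Lemma stepE a b a' b' : step (BNode a b) (BNode a' b') =
      [|| match a, a' with
          | BNode u v, BNode u' w' => [&& u' == u, w' == b & b' == v]
          | _, _ => false end,
          match b, b' with
          | BNode v w, BNode u' w' => [&& a' == v, u' == a & w' == w]
          | _, _ => false end,
          step a a' && (b == b')
        | (a == a') && step b b'].
Proof. by []. Qed.

Lemma step_YZ t t' : step t t' ->
  [/\ perm_eq (Yl t) (Yl t'), perm_eq (Zl t) (Zl t'), is_node t & is_node t'].
Proof.
elim: t t' => [i|a IHa b IHb] [j|a' b'] //.
rewrite stepE => /or4P [h|h|/andP [h /eqP <-]|/andP [/eqP <- h]]; split => //.
- move: h; case: a {IHa} => [//|u v]; case: a' => [//|u' w'] /and3P [/eqP -> /eqP -> /eqP ->].
  by rewrite !YlE !lYN !YlE -!catA perm_cat2l perm_catC.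
- move: h; case: a {IHa} => [//|u v]; case: a' => [//|u' w'] /and3P [/eqP -> /eqP -> /eqP ->].
  by rewrite !ZlE !lZN !ZlE -!catA perm_cat2l perm_catC.
- move: h; case: b {IHb} => [//|v w]; case: b' => [//|u' w'] /and3P [/eqP -> /eqP -> /eqP ->].
  by rewrite !YlE !rYN !YlE !catA perm_cat2r perm_catC.
- move: h; case: b {IHb} => [//|v w]; case: b' => [//|u' w'] /and3P [/eqP -> /eqP -> /eqP ->].
  by rewrite !ZlE !rZN !ZlE !catA perm_cat2r perm_catC.
- have [pY _ na na'] := IHa _ h.
  by rewrite !YlE; have [-> _ _ _] := nodeYZ na; have [-> _ _ _] := nodeYZ na'; rewrite perm_cat2r.
- have [_ pZ na na'] := IHa _ h.
  by rewrite !ZlE; have [_ _ -> _] := nodeYZ na; have [_ _ -> _] := nodeYZ na'; rewrite perm_cat2r.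
- have [pY _ na na'] := IHb _ h.
  by rewrite !YlE; have [_ -> _ _] := nodeYZ na; have [_ -> _ _] := nodeYZ na'; rewrite perm_cat2l.
- have [_ pZ na na'] := IHb _ h.
  by rewrite !ZlE; have [_ _ _ ->] := nodeYZ na; have [_ _ _ ->] := nodeYZ na'; rewrite perm_cat2l.
Qed.

Lemma step_leaves t t' : step t t' -> perm_eq (leaves t) (leaves t').
Proof.
move=> /step_YZ [pY pZ nt nt'].
apply: perm_trans (perm_leaves nt) _; rewrite perm_sym.
by apply: perm_trans (perm_leaves nt') _; apply: perm_cat; rewrite perm_sym.
Qed.

Inductive eqv : bmon -> bmon -> Prop :=
| eqv_refl t : eqv t t
| eqv_f t1 t2 t3 : step t1 t2 -> eqv t2 t3 -> eqv t1 t3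
| eqv_b t1 t2 t3 : step t2 t1 -> eqv t2 t3 -> eqv t1 t3.
Arguments eqv_f {t1 t2 t3}.
Arguments eqv_b {t1 t2 t3}.

Lemma eqv_trans t1 t2 t3 : eqv t1 t2 -> eqv t2 t3 -> eqv t1 t3.
Proof.
elim=> // [a b c h _ IH|a b c h _ IH] /IH; [exact: eqv_f | exact: eqv_b].
Qed.

Lemma eqv_sym t1 t2 : eqv t1 t2 -> eqv t2 t1.
Proof.
elim=> [t|a b c h _ IH|a b c h _ IH]; first exact: eqv_refl.
  exact: eqv_trans IH (eqv_b h (eqv_refl a)).
exact: eqv_trans IH (eqv_f h (eqv_refl a)).
Qed.

Arguments eqv_trans {t1 t2 t3}.
Arguments eqv_sym {t1 t2}.
Lemma eqv1 t t' : step t t' -> eqv t t'.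
Proof. by move=> h; apply: eqv_f h (eqv_refl _). Qed.

Lemma step_congl a a' b : step a a' -> step (BNode a b) (BNode a' b).
Proof. by move=> h; rewrite stepE; apply/or4P; apply: Or43; rewrite h eqxx. Qed.
Arguments step_congl {a a'} b.
Lemma step_congr a b b' : step b b' -> step (BNode a b) (BNode a b').
Proof. by move=> h; rewrite stepE; apply/or4P; apply: Or44; rewrite h eqxx. Qed.
Arguments step_congr a {b b'}.
Lemma stepR u v w : step (BNode (BNode u v) w) (BNode (BNode u w) v).
Proof. by rewrite stepE; apply/or4P; apply: Or41; rewrite !eqxx. Qed.
Lemma stepL u v w : step (BNode u (BNode v w)) (BNode v (BNode u w)).
Proof. by rewrite stepE; apply/or4P; apply: Or42; rewrite !eqxx. Qed.

Lemma eqv_congl a a' b : eqv a a' -> eqv (BNode a b) (BNode a' b).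
Proof.
elim=> [t|x y z h _ IH|x y z h _ IH]; first exact: eqv_refl.
  exact: eqv_f (step_congl _ h) IH.
exact: eqv_b (step_congl _ h) IH.
Qed.
Lemma eqv_congr a b b' : eqv b b' -> eqv (BNode a b) (BNode a b').
Proof.
elim=> [t|x y z h _ IH|x y z h _ IH]; first exact: eqv_refl.
  exact: eqv_f (step_congr _ h) IH.
exact: eqv_b (step_congr _ h) IH.
Qed.

Arguments eqv_congl {a a'} b.
Arguments eqv_congr a {b b'}.
Lemma eqvLR u X w : is_node X -> eqv (BNode (BNode u X) w) (BNode u (BNode X w)).
Proof.
case: X => // x1 x2 _.
apply: eqv_f (step_congl _ (stepL _ _ _)) _.
apply: eqv_f (stepR _ _ _) _.
apply: eqv_f (stepL _ _ _) _.
by apply: eqv1; apply: step_congr; apply: stepR.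
Qed.

Lemma perm_bubble (R : seq nat -> seq nat -> Prop) :
  (forall s, R s s) -> (forall s1 s2 s3, R s1 s2 -> R s2 s3 -> R s1 s3) ->
  (forall a b s, R (a :: b :: s) (b :: a :: s)) ->
  (forall a s s', R s s' -> R (a :: s) (a :: s')) ->
  forall s s', perm_eq s s' -> R s s'.
Proof.
move=> Rr Rt Rsw Rc; elim=> [|a s IH] s' hp.
  by move: (perm_size hp); case: s' {hp} => // _; apply: Rr.
have ha : a \in s' by rewrite -(perm_mem hp) mem_head.
move: hp; case/splitPr: ha => s1 s2 hp.
have h1 : R (a :: s) (a :: s1 ++ s2).
  apply: Rc; apply: IH; rewrite -(perm_cons a); apply: perm_trans hp _.
  by apply/permP => P; rewrite /= !count_cat /=; lia.
have h2 : forall s1, R (a :: s1 ++ s2) (s1 ++ a :: s2).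
  elim=> [|b s0 IH1] /=; first exact: Rr.
  by apply: Rt (Rsw a b _) _; apply: Rc; apply: IH1.
exact: Rt h1 (h2 s1).
Qed.

Fixpoint Lch (ys : seq nat) (B : bmon) : bmon :=
  if ys is y :: ys' then BNode (BLeaf y) (Lch ys' B) else B.
Fixpoint Rch (zs : seq nat) (B : bmon) : bmon :=
  if zs is z :: zs' then BNode (Rch zs' B) (BLeaf z) else B.

Lemma Lch_cat s1 s2 B : Lch (s1 ++ s2) B = Lch s1 (Lch s2 B).
Proof. by elim: s1 => //= y s IH; rewrite IH. Qed.
Lemma Rch_cat s1 s2 B : Rch (s1 ++ s2) B = Rch s1 (Rch s2 B).
Proof. by elim: s1 => //= y s IH; rewrite IH. Qed.
Lemma Lch_node s B : is_node B -> is_node (Lch s B). Proof. by case: s. Qed.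
Lemma Rch_node s B : is_node B -> is_node (Rch s B). Proof. by case: s. Qed.
Arguments Lch_node s {B}.
Arguments Rch_node s {B}.

Lemma Lch_perm B s s' : perm_eq s s' -> eqv (Lch s B) (Lch s' B).
Proof.
apply: (@perm_bubble (fun s s' => eqv (Lch s B) (Lch s' B))).
- by move=> ?; apply: eqv_refl.
- by move=> ? ? ?; apply: eqv_trans.
- by move=> a b s0 /=; apply: eqv1; apply: stepL.
- by move=> a s0 s0' h /=; apply: eqv_congr.
Qed.
Lemma Rch_perm B s s' : perm_eq s s' -> eqv (Rch s B) (Rch s' B).
Proof.
apply: (@perm_bubble (fun s s' => eqv (Rch s B) (Rch s' B))).
- by move=> ?; apply: eqv_refl.
- by move=> ? ? ?; apply: eqv_trans.
- by move=> a b s0 /=; apply: eqv1; apply: stepR.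
- by move=> a s0 s0' h /=; apply: eqv_congl.
Qed.
Arguments Lch_perm B {s s'}.
Arguments Rch_perm B {s s'}.
Lemma Lch_cong s B B' : eqv B B' -> eqv (Lch s B) (Lch s B').
Proof. by elim: s => //= y s IH h; apply: eqv_congr; apply: IH. Qed.
Lemma Rch_cong s B B' : eqv B B' -> eqv (Rch s B) (Rch s B').
Proof. by elim: s => //= y s IH h; apply: eqv_congl; apply: IH. Qed.

Lemma eqvR1 L X w : is_node X -> eqv (BNode (Lch L X) w) (Lch L (BNode X w)).
Proof.
move=> nX; elim: L => [|y L IH] /=; first exact: eqv_refl.
apply: eqv_trans (eqvLR _ _ _ (Lch_node _ nX)) _.
exact: eqv_congr.
Qed.
Lemma eqvM1 L X W : eqv (BNode X (Lch L W)) (Lch L (BNode X W)).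
Proof.
elim: L => [|y L IH] /=; first exact: eqv_refl.
apply: eqv_f (stepL _ _ _) _; exact: eqv_congr.
Qed.
Lemma eqvM2 Z X B : is_node B -> eqv (BNode X (Rch Z B)) (Rch Z (BNode X B)).
Proof.
move=> nB; elim: Z => [|z Z IH] /=; first exact: eqv_refl.
apply: eqv_trans (eqv_sym (eqvLR _ _ _ (Rch_node _ nB))) _.
exact: eqv_congl.
Qed.
Lemma eqvR2 Z L W : is_node W -> eqv (Rch Z (Lch L W)) (Lch L (Rch Z W)).
Proof.
move=> nW; elim: Z => [|z Z IH] /=; first exact: eqv_refl.
apply: eqv_trans (eqv_congl _ IH) _.
exact: eqvR1 _ _ _ (Rch_node _ nW).
Qed.

Lemma Rch_nodeN s a b : is_node (Rch s (BNode a b)). Proof. by case: s. Qed.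
Lemma eqvM2N Z X a b : eqv (BNode X (Rch Z (BNode a b))) (Rch Z (BNode X (BNode a b))).
Proof. exact: eqvM2. Qed.

Definition Cn (ys zs : seq nat) : bmon :=
  match ys, zs with
  | y :: ys', z :: zs' => Lch ys' (Rch zs' (BNode (BLeaf y) (BLeaf z)))
  | _, _ => BLeaf 0
  end.

Lemma permC (s1 s2 : seq nat) : (forall P, count P s1 = count P s2) -> perm_eq s1 s2.
Proof. by move=> h; apply/permP. Qed.

Lemma HY Z y z y' ys ys' : perm_eq (y :: ys) (y' :: ys') ->
  eqv (Lch ys (Rch Z (BNode (BLeaf y) (BLeaf z))))
      (Lch ys' (Rch Z (BNode (BLeaf y') (BLeaf z)))).
Proof.
case: (y =P y') => [<-|neq] hp; first by rewrite perm_cons in hp; apply: Lch_perm.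
have hy' : y' \in ys.
  by move: (mem_head y' ys'); rewrite -(perm_mem hp) in_cons => /orP [/eqP h|//]; rewrite h in neq.
have p1 : perm_eq ys (rem y' ys ++ [:: y']).
  by apply: perm_trans (perm_to_rem hy') _; apply/permP => P; rewrite count_cat /=; lia.
apply: eqv_trans (Lch_perm _ p1) _; rewrite Lch_cat /=.
have p2 : perm_eq (rem y' ys ++ [:: y]) ys'.
  move/permP: hp => hp; move/permP: p1 => p1; apply/permP => P.
  move: (hp P) (p1 P); rewrite /= !count_cat /=; lia.
apply: eqv_trans _ (Lch_perm _ p2); rewrite Lch_cat /=.
apply: Lch_cong.
apply: eqv_trans (eqvM2N _ _ _ _) _.
apply: eqv_trans _ (eqv_sym (eqvM2N _ _ _ _)).
by apply: Rch_cong; apply: eqv1; apply: stepL.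
Qed.

Lemma HZ y z z' zs zs' : perm_eq (z :: zs) (z' :: zs') ->
  eqv (Rch zs (BNode (BLeaf y) (BLeaf z))) (Rch zs' (BNode (BLeaf y) (BLeaf z'))).
Proof.
case: (z =P z') => [<-|neq] hp; first by rewrite perm_cons in hp; apply: Rch_perm.
have hz' : z' \in zs.
  by move: (mem_head z' zs'); rewrite -(perm_mem hp) in_cons => /orP [/eqP h|//]; rewrite h in neq.
have p1 : perm_eq zs (rem z' zs ++ [:: z']).
  by apply: perm_trans (perm_to_rem hz') _; apply/permP => P; rewrite count_cat /=; lia.
apply: eqv_trans (Rch_perm _ p1) _; rewrite Rch_cat /=.
have p2 : perm_eq (rem z' zs ++ [:: z]) zs'.
  move/permP: hp => hp; move/permP: p1 => p1; apply/permP => P.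
  move: (hp P) (p1 P); rewrite /= !count_cat /=; lia.
apply: eqv_trans _ (Rch_perm _ p2); rewrite Rch_cat /=.
by apply: Rch_cong; apply: eqv1; apply: stepR.
Qed.

Lemma Cn_perm y ys z zs y' ys' z' zs' :
  perm_eq (y :: ys) (y' :: ys') -> perm_eq (z :: zs) (z' :: zs') ->
  eqv (Cn (y :: ys) (z :: zs)) (Cn (y' :: ys') (z' :: zs')).
Proof.
move=> hy hz; rewrite /Cn.
apply: eqv_trans (@HY zs _ z _ _ _ hy) _.
by apply: Lch_cong; apply: HZ.
Qed.

Lemma to_Cn {t : bmon} : is_node t -> exists y ys z zs,
  [/\ perm_eq (y :: ys) (Yl t), perm_eq (z :: zs) (Zl t) & eqv t (Cn (y :: ys) (z :: zs))].
Proof.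
elim: t => // a IHa b IHb _.
case: a IHa => [i|a1 a2] IHa; case: b IHb => [j|b1 b2] IHb.
- by exists i, [::], j, [::]; split => //; apply: eqv_refl.
- have [y [ys [z [zs [py pz e]]]]] := IHb isT.
  exists y, (i :: ys), z, zs; split.
  + rewrite YlE rYN; move: (Yl _) py => Yb py; move/permP: py => py; apply/permP => P; move: (py P) => /=; lia.
  + by rewrite ZlE rZN.
  + exact: eqv_congr _ e.
- have [y [ys [z [zs [py pz e]]]]] := IHa isT.
  exists y, ys, z, (j :: zs); split.
  + by rewrite YlE lYN cats0.
  + rewrite ZlE lZN; move: (Zl _) pz => Za pz; move/permP: pz => pz; apply/permP => P; move: (pz P).
    rewrite /= count_cat /=; lia.
  + apply: eqv_trans (eqv_congl _ e) _; rewrite /Cn /=.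
    exact: eqvR1 _ _ _ (Rch_nodeN _ _ _).
- have [y [ys [z [zs [py pz e]]]]] := IHa isT.
  have [y' [ys' [z' [zs' [py' pz' e']]]]] := IHb isT.
  exists y, (ys' ++ y' :: ys), z, (zs' ++ z' :: zs); split.
  + rewrite YlE lYN rYN; move: (Yl (BNode a1 a2)) (Yl (BNode b1 b2)) py py' => Ya Yb py py'; move/permP: py => py; move/permP: py' => py'; apply/permP => P.
    move: (py P) (py' P); rewrite /= !count_cat /=; lia.
  + rewrite ZlE lZN rZN; move: (Zl (BNode a1 a2)) (Zl (BNode b1 b2)) pz pz' => Za Zb pz pz'; move/permP: pz => pz; move/permP: pz' => pz'; apply/permP => P.
    move: (pz P) (pz' P); rewrite /= !count_cat /=; lia.
  + apply: eqv_trans (eqv_congl _ e) _.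
    apply: eqv_trans (eqv_congr _ e') _.
    rewrite /Cn Lch_cat Rch_cat.
    apply: eqv_trans (eqvM1 _ _ _) _; apply: Lch_cong.
    apply: eqv_trans (eqvM2N _ _ _ _) _.
    apply: eqv_trans _ (eqvR2 _ _ _ (Rch_nodeN _ _ _)); apply: Rch_cong.
    apply: eqv_f (stepL _ _ _) _; rewrite [Lch (y' :: ys) _]/=; apply: eqv_congr.
    exact: eqvR1 _ _ _ (Rch_nodeN _ _ _).
Qed.

Theorem eqv_YZ t t' : is_node t -> is_node t' ->
  perm_eq (Yl t) (Yl t') -> perm_eq (Zl t) (Zl t') -> eqv t t'.
Proof.
move=> nt nt' pY pZ.
have [y [ys [z [zs [py pz e]]]]] := to_Cn nt.
have [y' [ys' [z' [zs' [py' pz' e']]]]] := to_Cn nt'.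
apply: eqv_trans e _; apply: eqv_trans _ (eqv_sym e').
apply: Cn_perm.
  by apply: perm_trans py _; apply: perm_trans pY _; rewrite perm_sym.
by apply: perm_trans pz _; apply: perm_trans pZ _; rewrite perm_sym.
Qed.

Lemma Yl_Lch L X : is_node X -> Yl (Lch L X) = L ++ Yl X.
Proof.
move=> nX; elim: L => // y L IH.
change (Lch (y :: L) X) with (BNode (BLeaf y) (Lch L X)).
by rewrite YlE; have [_ -> _ _] := nodeYZ (Lch_node L nX); rewrite IH.
Qed.
Lemma Zl_Lch L X : is_node X -> Zl (Lch L X) = Zl X.
Proof.
move=> nX; elim: L => // y L IH.
change (Lch (y :: L) X) with (BNode (BLeaf y) (Lch L X)).
by rewrite ZlE; have [_ _ _ ->] := nodeYZ (Lch_node L nX); rewrite IH.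
Qed.
Lemma Yl_Rch Z X : is_node X -> Yl (Rch Z X) = Yl X.
Proof.
move=> nX; elim: Z => // z Z IH.
change (Rch (z :: Z) X) with (BNode (Rch Z X) (BLeaf z)).
by rewrite YlE; have [-> _ _ _] := nodeYZ (Rch_node Z nX); rewrite IH cats0.
Qed.
Lemma Zl_Rch Z X : is_node X -> perm_eq (Zl (Rch Z X)) (Z ++ Zl X).
Proof.
move=> nX; elim: Z => // z Z IH.
change (Rch (z :: Z) X) with (BNode (Rch Z X) (BLeaf z)).
rewrite ZlE; have [_ _ -> _] := nodeYZ (Rch_node Z nX).
move: (Zl (Rch Z X)) IH => ZZ /permP IH; apply/permP => P; move: (IH P).
rewrite /= !count_cat /=; lia.
Qed.

Lemma Cn_YZ y ys z zs :
  [/\ perm_eq (Yl (Cn (y :: ys) (z :: zs))) (y :: ys),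
      perm_eq (Zl (Cn (y :: ys) (z :: zs))) (z :: zs) & is_node (Cn (y :: ys) (z :: zs))].
Proof.
rewrite /Cn; split; last exact: Lch_node (Rch_nodeN _ _ _).
  rewrite Yl_Lch ?Rch_nodeN // Yl_Rch //=.
  by apply/permP => P; rewrite !count_cat /=; lia.
rewrite Zl_Lch ?Rch_nodeN //; apply: perm_trans (Zl_Rch zs (BNode (BLeaf y) (BLeaf z)) isT) _.
by apply/permP => P; rewrite !count_cat /=; lia.
Qed.

Definition phi (t : bmon) : seq nat * seq nat := (sort leq (Yl t), sort leq (Zl t)).
Definition canon (uv : seq nat * seq nat) : bmon := Cn uv.1 uv.2.

Lemma sort_perm {s s' : seq nat} : perm_eq s s' -> sort leq s = sort leq s'.
Proof. by move/(perm_sortP leq_total leq_trans anti_leq). Qed.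

Lemma phi_perm {t t' : bmon} : perm_eq (Yl t) (Yl t') -> perm_eq (Zl t) (Zl t') -> phi t = phi t'.
Proof. by move=> h1 h2; rewrite /phi (sort_perm h1) (sort_perm h2). Qed.

Lemma phi_eqv t t' : is_node t -> is_node t' -> phi t = phi t' -> eqv t t'.
Proof.
move=> nt nt' [h1 h2]; apply: eqv_YZ => //.
  by rewrite -(perm_sort leq) h1 perm_sort.
by rewrite -(perm_sort leq) h2 perm_sort.
Qed.

Lemma phi_mem d n t : t \in sqbasis d n -> phi t \in pbasis d n.
Proof.
rewrite mem_sqbasis => /and3P [nt /eqP sz ok].
have [y [ys [z [zs [py pz _]]]]] := to_Cn nt.
have pl := perm_leaves nt.
rewrite mem_pbasis !sort_sorted ?leq_total //= !size_sort /okl !all_sort.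
move: ok; rewrite /okl (perm_all _ pl) all_cat => /andP [-> ->] /=.
rewrite -(perm_size py) -(perm_size pz) /= -sz (perm_size pl) size_cat.
by rewrite -(perm_size py) -(perm_size pz).
Qed.

Lemma canon_mem d n uv : uv \in pbasis d n -> canon uv \in sqbasis d n /\ phi (canon uv) = uv.
Proof.
case: uv => u v; rewrite mem_pbasis => /and5P [su sv ou ov /and3P [hu hv /eqP hn]].
case: u su ou hu hn => [//|y ys] su ou _; case: v sv ov hv => [//|z zs] sv ov _ hn.
have [pY pZ nC] := Cn_YZ y ys z zs.
split.
  rewrite mem_sqbasis /canon /= nC /=.
  have pl := perm_leaves nC.
  rewrite (perm_size pl) size_cat (perm_size pY) (perm_size pZ) hn eqxx /=.
  by rewrite /okl (perm_all _ pl) all_cat (perm_all _ pY) (perm_all _ pZ); apply/andP.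
rewrite /phi /canon /= (sort_perm pY) (sort_perm pZ).
by rewrite !sorted_sort //; apply: leq_trans.
Qed.

Definition Amat (K : fieldType) d n : 'M[K]_(NS d n, NT d n) :=
  \matrix_(i, k) ((phi (sqt i) == pt k)%:R).
Definition Smat (K : fieldType) d n : 'M[K]_(NT d n, NS d n) :=
  \matrix_(k, j) ((canon (pt k) == sqt j)%:R).

Lemma sum_sqt (K : fieldType) d n (F : bmon -> K) :
  \sum_(i < NS d n) F (sqt i) = \sum_(t <- sqbasis d n) F t.
Proof. by rewrite [RHS](big_nth (BLeaf 0)) big_mkord. Qed.
Lemma sum_pt (K : fieldType) d n (F : seq nat * seq nat -> K) :
  \sum_(k < NT d n) F (pt k) = \sum_(x <- pbasis d n) F x.
Proof. by rewrite [RHS](big_nth ([::], [::])) big_mkord. Qed.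

Lemma sum_pick (K : fieldType) (T : eqType) (r : seq T) x (F : T -> K) :
  x \in r -> uniq r -> \sum_(y <- r) (x == y)%:R * F y = F x.
Proof.
move=> hx ur; rewrite (bigD1_seq x) //= eqxx mul1r big1 ?addr0 // => y.
by rewrite eq_sym => /negbTE ->; rewrite mul0r.
Qed.

Lemma sqt_mem d n (i : 'I_(NS d n)) : sqt i \in sqbasis d n.
Proof. exact: mem_nth (ltn_ord i). Qed.
Lemma pt_mem d n (k : 'I_(NT d n)) : pt k \in pbasis d n.
Proof. exact: mem_nth (ltn_ord k). Qed.
Lemma sqt_inj d n : injective (@sqt d n).
Proof.
move=> i j h; apply/val_inj/eqP.
by rewrite -(nth_uniq (BLeaf 0) (ltn_ord i) (ltn_ord j) (uniq_sqbasis d n)); apply/eqP.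
Qed.
Lemma pt_inj d n : injective (@pt d n).
Proof.
move=> i j h; apply/val_inj/eqP.
by rewrite -(nth_uniq ([::], [::]) (ltn_ord i) (ltn_ord j) (uniq_pbasis d n)); apply/eqP.
Qed.
Lemma sqt_idx d n t : t \in sqbasis d n -> exists i : 'I_(NS d n), sqt i = t.
Proof.
move=> ht; have hi : (index t (sqbasis d n) < NS d n)%N by rewrite index_mem.
by exists (Ordinal hi); rewrite /sqt nth_index.
Qed.

Arguments sqt_mem {d n}.
Arguments pt_mem {d n}.
Arguments sqt_idx {d n t}.
Arguments canon_mem {d n uv}.
Arguments phi_mem {d n t}.

Lemma SA K d n : Smat K d n *m Amat K d n = 1%:M.
Proof.
apply/matrixP => k k'; rewrite !mxE.
under eq_bigr do rewrite !mxE.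
rewrite (@sum_sqt _ d n (fun t => (canon (pt k) == t)%:R * (phi t == pt k')%:R)).
have [hm hp] := canon_mem (pt_mem k).
rewrite sum_pick ?uniq_sqbasis // hp (inj_eq (@pt_inj d n)).
by [].
Qed.

Lemma AS_entry K d n i j :
  (Amat K d n *m Smat K d n) i j = (canon (phi (sqt i)) == sqt j)%:R.
Proof.
rewrite !mxE; under eq_bigr do rewrite !mxE.
rewrite (@sum_pt _ d n (fun x => (phi (sqt i) == x)%:R * (canon x == sqt j)%:R)).
by rewrite sum_pick ?uniq_pbasis // phi_mem // sqt_mem.
Qed.

Arguments step_YZ {t t'}.
Arguments step_leaves {t t'}.

Lemma step_mem d n t t' : step t t' -> t \in sqbasis d n -> t' \in sqbasis d n.
Proof.
move=> h; have [_ _ _ nt'] := step_YZ h; have pl := step_leaves h.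
by rewrite !mem_sqbasis nt' (perm_size pl) /okl (perm_all _ pl) => /and3P [_ -> ->].
Qed.

Lemma step_mem' d n t t' : step t t' -> t' \in sqbasis d n -> t \in sqbasis d n.
Proof.
move=> h; have [_ _ nt _] := step_YZ h; have pl := step_leaves h.
by rewrite !mem_sqbasis nt -(perm_size pl) /okl -(perm_all _ pl) => /and3P [_ -> ->].
Qed.

Arguments step_mem {d n t t'}.
Arguments step_mem' {d n t t'}.

Lemma in_ideal (K : fieldType) d n t t' : eqv t t' -> forall i j : 'I_(NS d n), sqt i = t -> sqt j = t' ->
  ((delta_mx 0 i - delta_mx 0 j : 'rV[K]_(NS d n)) <= IdealB K d n)%MS.
Proof.
elim=> [t0|t1 t2 t3 h _ IH|t1 t2 t3 h _ IH] i j hi hj.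
- have -> : i = j by apply: sqt_inj; rewrite hi hj.
  by rewrite subrr sub0mx.
- have mi : t1 \in sqbasis d n by rewrite -hi sqt_mem.
  have [k hk] := sqt_idx (step_mem h mi).
  have -> : (delta_mx 0 i - delta_mx 0 j : 'rV[K]_(NS d n)) =
            (delta_mx 0 i - delta_mx 0 k) + (delta_mx 0 k - delta_mx 0 j) by rewrite addrA subrK.
  apply: addmx_sub; last exact: IH.
  apply: (sumsmx_sup i) => //; apply: (sumsmx_sup k) => //.
  by rewrite hi hk h genmxE.
- have mi : t1 \in sqbasis d n by rewrite -hi sqt_mem.
  have [k hk] := sqt_idx (step_mem' h mi).
  have -> : (delta_mx 0 i - delta_mx 0 j : 'rV[K]_(NS d n)) =
            - (delta_mx 0 k - delta_mx 0 i) + (delta_mx 0 k - delta_mx 0 j)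
    by rewrite opprB addrA subrK.
  apply: addmx_sub; last exact: IH.
  rewrite eqmx_opp.
  apply: (sumsmx_sup k) => //; apply: (sumsmx_sup i) => //.
  by rewrite hi hk h genmxE.
Qed.

Lemma ker_A (K : fieldType) d n : (kermx (Amat K d n) == IdealB K d n)%MS.
Proof.
apply/andP; split.
  apply/rV_subP => v /sub_kermxP vA.
  have -> : v = v *m (1%:M - Amat K d n *m Smat K d n).
    by rewrite mulmxBr mulmx1 mulmxA vA mul0mx subr0.
  apply: submx_trans (submxMl _ _) _.
  apply/row_subP => i.
  have mi := sqt_mem i.
  have [hm hp] := canon_mem (phi_mem mi).
  have [j0 hj0] := sqt_idx hm.
  have -> : row i (1%:M - Amat K d n *m Smat K d n) = delta_mx 0 i - delta_mx 0 j0.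
    apply/rowP => j; rewrite mxE mxE [X in _ + X]mxE AS_entry !mxE -hj0 (inj_eq (@sqt_inj d n)) /=.
    by rewrite eq_sym [j == j0]eq_sym.
  apply: (@in_ideal K d n (sqt i) (sqt j0)) => //.
  apply: phi_eqv.
  - by move: mi; rewrite mem_sqbasis => /andP [].
  - by move: hm; rewrite -hj0 mem_sqbasis => /andP [].
  by rewrite hj0 hp.
apply/sumsmx_subP => i _; apply/sumsmx_subP => j _.
case: ifP => h; last by rewrite sub0mx.
rewrite genmxE sub_kermx mulmxBl -!rowE subr_eq0; apply/eqP/rowP => k; rewrite !mxE.
have [pY pZ _ _] := step_YZ h.
by rewrite (phi_perm pY pZ).
Qed.

Lemma row_full_A (K : fieldType) d n : row_full (Amat K d n).
Proof. by apply/row_fullP; exists (Smat K d n); apply: SA. Qed.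

Lemma grading_A (K : fieldType) d n i j :
  mdeg_tree d (sqt i) != mdeg_pair d (pt j) -> Amat K d n i j = 0.
Proof.
move=> hne; rewrite mxE.
suff /negbTE -> : phi (sqt i) != pt j by [].
apply: contra hne => /eqP h; rewrite -h /mdeg_tree /mdeg_pair /=.
apply/eqP/eq_map => k.
have nt : is_node (sqt i) by move: (sqt_mem i); rewrite mem_sqbasis => /andP [].
have hp : perm_eq (leaves (sqt i)) (sort leq (Yl (sqt i)) ++ sort leq (Zl (sqt i))).
  apply: perm_trans (perm_leaves nt) _.
  by apply: perm_cat; rewrite perm_sym perm_sort.
by rewrite (permP hp).
Qed.

Local Notation shape := Defs.shape.

Fixpoint relab (t : bmon) (w : seq nat) : bmon :=
  match t with
  | BLeaf _ => BLeaf (head 0%N w)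
  | BNode a b => BNode (relab a (take (size (leaves a)) w)) (relab b (drop (size (leaves a)) w))
  end.

Fixpoint ym (t : bmon) : bitseq :=
  match t with
  | BLeaf _ => [::]
  | BNode a b => (if a is BLeaf _ then [:: true] else ym a) ++ (if b is BLeaf _ then [:: false] else ym b)
  end.

Lemma leaves_relab t w : size w = size (leaves t) -> leaves (relab t w) = w.
Proof.
elim: t w => [i|a IHa b IHb] w /=.
  by case: w => [|x [|y w]].
rewrite size_cat => hw.
have h1 : size (take (size (leaves a)) w) = size (leaves a) by rewrite size_takel // hw leq_addr.
have h2 : size (drop (size (leaves a)) w) = size (leaves b) by rewrite size_drop hw addKn.
by rewrite IHa // IHb // cat_take_drop.
Qed.

Lemma shape_relab t w : shape (relab t w) = shape t.
Proof. by elim: t w => [i|a IHa b IHb] w //=; rewrite IHa IHb. Qed.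

Lemma size_shape t : size (leaves (shape t)) = size (leaves t).
Proof. by elim: t => //= a IHa b IHb; rewrite !size_cat IHa IHb. Qed.

Lemma relab_shape t t' : shape t = shape t' -> relab t (leaves t') = t'.
Proof.
elim: t t' => [i|a IHa b IHb] [j|a' b'] //= [ha hb].
have e : size (leaves a) = size (leaves a') by rewrite -size_shape ha size_shape.
by rewrite e take_size_cat // drop_size_cat // IHa // IHb.
Qed.

Lemma node_relab t w : is_node (relab t w) = is_node t.
Proof. by case: t. Qed.

Lemma ym_shape t t' : shape t = shape t' -> ym t = ym t'.
Proof.
elim: t t' => [i|a IHa b IHb] [j|a' b'] //= [ha hb].
congr (_ ++ _).
  by case: a a' IHa ha => [?|? ?] [?|? ?] IHa ha //; apply: IHa.
by case: b b' IHb hb => [?|? ?] [?|? ?] IHb hb //; apply: IHb.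
Qed.

Lemma size_ym t : is_node t -> size (ym t) = size (leaves t).
Proof.
elim: t => // a IHa b IHb _ /=; rewrite !size_cat.
by case: a IHa => [?|? ?] IHa; case: b IHb => [?|? ?] IHb //=; rewrite ?IHa ?IHb.
Qed.

Lemma Yl_mask {t : bmon} : is_node t -> Yl t = mask (ym t) (leaves t).
Proof.
elim: t => // a IHa b IHb _; rewrite YlE /=.
have sa : size (if a is BLeaf _ then [:: true] else ym a) = size (leaves a).
  by case: a IHa => [?|? ?] // _; rewrite size_ym.
rewrite mask_cat //; congr (_ ++ _).
  by case: a IHa sa => [?|? ?] IHa sa //; rewrite -IHa.
by case: b IHb => [?|? ?] IHb //; rewrite -IHb.
Qed.

Lemma Zl_mask {t : bmon} : is_node t -> Zl t = mask (map negb (ym t)) (leaves t).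
Proof.
elim: t => // a IHa b IHb _; rewrite ZlE /= map_cat.
have sa : size (map negb (if a is BLeaf _ then [:: true] else ym a)) = size (leaves a).
  by case: a IHa => [?|? ?] // _; rewrite size_map size_ym.
rewrite mask_cat //; congr (_ ++ _).
  by case: a IHa sa => [?|? ?] IHa sa //; rewrite -IHa.
by case: b IHb => [?|? ?] IHb //; rewrite -IHb.
Qed.

From mathcomp Require Import ring.

Definition pz (K : fieldType) d (g : 'M[K]_d) (w L : seq nat) : K :=
  \prod_(pr <- zip w L) gent g pr.1 pr.2.
Arguments pz {K d} g w L.
Lemma pz_cons (K : fieldType) d (g : 'M[K]_d) i w l L :
  pz g (i :: w) (l :: L) = gent g i l * pz g w L.
Proof. by rewrite /pz /= big_cons. Qed.
Lemma pz_nil (K : fieldType) d (g : 'M[K]_d) : pz g [::] [::] = 1.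
Proof. by rewrite /pz big_nil. Qed.

Lemma mask_split (K : fieldType) d (g : 'M[K]_d) (F : seq nat -> seq nat -> K) m L :
  size m = size L ->
  \sum_(w <- words d (size L)) F (mask m w) (mask (map negb m) w) * pz g w L =
  \sum_(w1 <- words d (size (mask m L))) \sum_(w2 <- words d (size (mask (map negb m) L)))
      F w1 w2 * (pz g w1 (mask m L) * pz g w2 (mask (map negb m) L)).
Proof.
elim: L m F => [|l L IH] [|b m] F //= hs.
  by rewrite !big_seq1 pz_nil !mulr1.
case: hs => hs; rewrite sum_words_S.
case: b => /=.
  rewrite sum_words_S; apply: eq_bigr => i _.
  under eq_bigr do rewrite pz_cons.
  transitivity (gent g i l * \sum_(w <- words d (size L))
                  F (i :: mask m w) (mask (map negb m) w) * pz g w L).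
    by rewrite mulr_sumr; apply: eq_bigr => w _; ring.
  rewrite (IH m (fun w1 w2 => F (i :: w1) w2)) // mulr_sumr; apply: eq_bigr => w1 _.
  rewrite mulr_sumr; apply: eq_bigr => w2 _; rewrite pz_cons; ring.
under [RHS]eq_bigr do rewrite sum_words_S.
rewrite [RHS]exchange_big; apply: eq_bigr => i _.
under eq_bigr do rewrite pz_cons.
transitivity (gent g i l * \sum_(w <- words d (size L))
                F (mask m w) (i :: mask (map negb m) w) * pz g w L).
  by rewrite mulr_sumr; apply: eq_bigr => w _; ring.
rewrite (IH m (fun w1 w2 => F w1 (i :: w2))) // mulr_sumr; apply: eq_bigr => w1 _.
rewrite mulr_sumr; apply: eq_bigr => w2 _; rewrite pz_cons; ring.
Qed.

Definition Phi (K : fieldType) d (g : 'M[K]_d) (F : seq nat -> K) (u : seq nat) : K :=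
  \sum_(w <- words d (size u)) F w * pz g w u.

Arguments Phi {K d} g F u.
Lemma Phi_cons (K : fieldType) d (g : 'M[K]_d) F a u :
  Phi g F (a :: u) = \sum_(i <- iota 0 d) gent g i a * Phi g (fun w => F (i :: w)) u.
Proof.
rewrite /Phi /= sum_words_S; apply: eq_bigr => i _; rewrite mulr_sumr.
by apply: eq_bigr => w _; rewrite pz_cons; ring.
Qed.

Lemma Phi_perm (K : fieldType) d (g : 'M[K]_d) u u' : perm_eq u u' ->
  forall F, (forall w w', perm_eq w w' -> F w = F w') -> Phi g F u = Phi g F u'.
Proof.
move: u u'; apply: (@perm_bubble (fun u u' => forall F,
   (forall w w', perm_eq w w' -> F w = F w') -> Phi g F u = Phi g F u')).
- by [].
- by move=> s1 s2 s3 h1 h2 F hF; rewrite (h1 F hF) (h2 F hF).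
- move=> a b s F hF; rewrite !Phi_cons.
  under eq_bigr do rewrite Phi_cons mulr_sumr.
  under [RHS]eq_bigr do rewrite Phi_cons mulr_sumr.
  rewrite [RHS]exchange_big; apply: eq_bigr => i _; apply: eq_bigr => j _.
  rewrite mulrCA; congr (_ * (_ * _)); rewrite /Phi; apply: eq_bigr => w _.
  congr (_ * _); apply: hF; apply/permP => P /=; lia.
- move=> a s s' h F hF; rewrite !Phi_cons; apply: eq_bigr => i _.
  congr (_ * _); apply: h => w w' hw; apply: hF; by rewrite perm_cons.
Qed.

Lemma pcoefE (K : fieldType) d (g : 'M[K]_d) u v :
  pcoef g u v = Phi g (fun w => (perm_eq w v)%:R) u.
Proof.
rewrite /pcoef /Phi big_mkcond; apply: eq_bigr => w _.
by case: (perm_eq w v); rewrite ?mul1r ?mul0r.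
Qed.

Lemma pcoef_perm (K : fieldType) d (g : 'M[K]_d) u u' v : perm_eq u u' ->
  pcoef g u v = pcoef g u' v.
Proof.
move=> h; rewrite !pcoefE; apply: (@Phi_perm K d g _ _ h) => w w' hw.
by rewrite (permPl hw).
Qed.

Lemma perm_filter_relab d n t : t \in sqbasis d n ->
  perm_eq [seq t' <- sqbasis d n | shape t == shape t'] (map (relab t) (words d n)).
Proof.
rewrite mem_sqbasis => /and3P [nt /eqP sz okt].
apply: uniq_perm.
- exact/filter_uniq/uniq_sqbasis.
- rewrite map_inj_in_uniq ?uniq_words // => w1 w2.
  rewrite !mem_words => /andP [/eqP s1 _] /andP [/eqP s2 _] h.
  by move: (congr1 leaves h); rewrite !leaves_relab // ?s1 ?s2 ?sz.
move=> t'; rewrite mem_filter; apply/andP/mapP.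
  move=> [/eqP hs]; rewrite mem_sqbasis => /and3P [_ /eqP s' ok'].
  exists (leaves t'); first by rewrite mem_words s' eqxx.
  by rewrite relab_shape.
move=> [w]; rewrite mem_words => /andP [/eqP sw okw] ->.
have hl : leaves (relab t w) = w by rewrite leaves_relab // sw.
split; first by rewrite shape_relab.
by rewrite mem_sqbasis node_relab nt hl sw eqxx.
Qed.

Lemma sort_eq_perm (a u : seq nat) : sorted leq u -> (sort leq a == u) = perm_eq a u.
Proof.
move=> su; apply/eqP/idP.
  by move=> <-; rewrite perm_sym perm_sort.
by move=> h; rewrite (sort_perm h) sorted_sort //; apply: leq_trans.
Qed.

Lemma GL_A (K : fieldType) d n (g : 'M[K]_d) :
  actS n g *m Amat K d n = Amat K d n *m actT n g.
Proof.
apply/matrixP => i k; rewrite !mxE.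
have mi := sqt_mem i.
have nt : is_node (sqt i) by move: mi; rewrite mem_sqbasis => /andP [].
have szn : size (leaves (sqt i)) = n by move: mi; rewrite mem_sqbasis => /and3P [_ /eqP].
have mk := pt_mem k.
case ek : (pt k) => [u v].
have [su sv] : sorted leq u /\ sorted leq v.
  by move: mk; rewrite ek mem_pbasis => /and3P [-> -> _].
under [RHS]eq_bigr do rewrite !mxE ek.
rewrite [RHS](@sum_pt K d n (fun x => (phi (sqt i) == x)%:R *
             (pcoef g x.1 u * pcoef g x.2 v))).
rewrite sum_pick ?uniq_pbasis ?phi_mem //= .
rewrite (@pcoef_perm K d g (sort leq (Yl (sqt i))) (Yl (sqt i))); last by rewrite perm_sort.
rewrite (@pcoef_perm K d g (sort leq (Zl (sqt i))) (Zl (sqt i))); last by rewrite perm_sort.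
under eq_bigr do rewrite !mxE ek.
rewrite (@sum_sqt K d n (fun t' => (if shape (sqt i) == shape t' then
             pz g (leaves t') (leaves (sqt i)) else 0) * (phi t' == (u, v))%:R)).
transitivity (\sum_(t' <- sqbasis d n | shape (sqt i) == shape t')
                pz g (leaves t') (leaves (sqt i)) * (phi t' == (u, v))%:R).
  by rewrite [RHS]big_mkcond; apply: eq_bigr => t' _; case: ifP => _; rewrite ?mul0r.
rewrite -big_filter (perm_big _ (@perm_filter_relab d n _ mi)) big_map.
set L := leaves (sqt i); set m := ym (sqt i).
transitivity (\sum_(w <- words d (size L))
   ((perm_eq (mask m w) u)%:R * (perm_eq (mask (map negb m) w) v)%:R) * pz g w L).
  rewrite /L szn; apply: eq_big_seq => w; rewrite mem_words => /andP [/eqP sw _].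
  have hl : leaves (relab (sqt i) w) = w by rewrite leaves_relab // sw szn.
  have nr : is_node (relab (sqt i) w) by rewrite node_relab.
  have ey : ym (relab (sqt i) w) = m by apply: ym_shape; rewrite shape_relab.
  rewrite hl /phi (Yl_mask nr) (Zl_mask nr) hl ey xpair_eqE !sort_eq_perm //.
  by case: (perm_eq _ u); case: (perm_eq _ v); rewrite /= ?mul1r ?mul0r ?mulr0 ?mulr1.
rewrite (@mask_split K d g (fun w1 w2 => (perm_eq w1 u)%:R * (perm_eq w2 v)%:R) m L);
  last by rewrite size_ym.
rewrite /L -(Yl_mask nt) -(Zl_mask nt) !pcoefE /Phi big_distrlr /=.
by apply: eq_bigr => w1 _; apply: eq_bigr => w2 _; ring.
Qed.

Theorem lemma3p1 (K : fieldType) (d : nat) :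
  [pchar K] =i pred0 -> (1 <= d)%N ->
  forall n : nat,
    (exists A : 'M[K]_(NS d n, NT d n),
        [/\ (kermx A == IdealB K d n)%MS, row_full A &
            forall i j, mdeg_tree d (sqt i) != mdeg_pair d (pt j) -> A i j = 0])
    /\
    (exists A : 'M[K]_(NS d n, NT d n),
        [/\ (kermx A == IdealB K d n)%MS, row_full A &
            forall g : 'M[K]_d, g \in unitmx -> actS n g *m A = A *m actT n g]).
Proof.
move=> _ _ n; split; exists (Amat K d n); split.
- exact: ker_A.
- exact: row_full_A.
- by move=> i j; apply: grading_A.
- exact: ker_A.
- exact: row_full_A.
- by move=> g _; apply: GL_A.
Qed.
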